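(* Let $\vec r:\mathbb{Z}\to\mathbb{R}^3$ be a discrete centroaffine space curve with invariants $\kappa_n,\bar\kappa_n,\tau_n$, let $(\beta_n)$ be nonzero reals and $\vec r'_n=\beta_n\vec r_n$ with torsions $\tau'_n$. If $\tau_n=0$ and $\tau'_n=0$ for all $n$, then for all $n$ $$\frac{1}{\beta_{n+2}}=\kappa_n\frac{1}{\beta_{n-1}}-(\kappa_n+\bar\kappa_n)\frac{1}{\beta_n}+(1+\bar\kappa_n)\frac{1}{\beta_{n+1}},$$ equivalently $\frac{1}{\beta_{n+2}}-\frac{1}{\beta_{n+1}}=\bar\kappa_n\Big(\frac{1}{\beta_{n+1}}-\frac{1}{\beta_n}\Big)-\kappa_n\Big(\frac{1}{\beta_n}-\frac{1}{\beta_{n-1}}\Big)$.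
   Context: A discrete centroaffine space curve is a map $\vec r:\mathbb{Z}\to\mathbb{R}^3$ with $[\vec r_{k-1},\vec r_k,\vec r_{k+1}]\ne0$ for all $k$, where $\vec r_k=\vec r(k)$, $[\cdot,\cdot,\cdot]$ is the $3\times3$ determinant and $\vec t_k=\vec r_{k+1}-\vec r_k$. With $D_k=[\vec r_{k-1},\vec r_k,\vec r_{k+1}]$: $\kappa_k=\frac{[\vec r_k,\vec r_{k+1},\vec r_{k+2}]}{D_k}$, $\bar\kappa_k=\frac{[\vec r_{k+1},\vec t_{k-1},\vec t_{k+1}]}{D_k}$, $\tau_k=\frac{[\vec t_{k-1},\vec t_k,\vec t_{k+1}]}{D_k}$ (first/second centroaffine curvature and centroaffine torsion). *)

(* Defs.v *)
(* the statement is purely algebraic, stated over an arbitrary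
   real field R (R^3 is 'rV[R]_3, curves are indexed by int). *)
From HB Require Import structures.
From mathcomp Require Import all_boot all_order all_algebra.
Set Implicit Arguments. Unset Strict Implicit. Unset Printing Implicit Defensive.
Import Order.TTheory GRing.Theory Num.Theory.
Local Open Scope ring_scope.

Definition det3 (R : realFieldType) (a b c : 'rV[R]_3) : R :=
  \det (col_mx a (col_mx b c) : 'M[R]_3).

Definition centroaffine_curve (R : realFieldType) (r : int -> 'rV[R]_3) : Prop :=
  forall k : int, det3 (r (k - 1)) (r k) (r (k + 1)) != 0.

Definition tangent (R : realFieldType) (r : int -> 'rV[R]_3) (k : int) : 'rV[R]_3 :=
  r (k + 1) - r k.

Definition Dk (R : realFieldType) (r : int -> 'rV[R]_3) (k : int) : R :=
  det3 (r (k - 1)) (r k) (r (k + 1)).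

Definition kappa (R : realFieldType) (r : int -> 'rV[R]_3) (k : int) : R :=
  det3 (r k) (r (k + 1)) (r (k + 2)) / Dk r k.

Definition kappabar (R : realFieldType) (r : int -> 'rV[R]_3) (k : int) : R :=
  det3 (r (k + 1)) (tangent r (k - 1)) (tangent r (k + 1)) / Dk r k.

Definition torsion (R : realFieldType) (r : int -> 'rV[R]_3) (k : int) : R :=
  det3 (tangent r (k - 1)) (tangent r k) (tangent r (k + 1)) / Dk r k.

(* Main.v *)
Require Import Defs.
From HB Require Import structures.
From mathcomp Require Import all_boot all_order all_algebra ring.
Import Order.TTheory GRing.Theory Num.Theory.
Local Open Scope ring_scope.

Lemma det33 (R : comRingType) (f : nat -> nat -> R) :
  \det (\matrix_(i < 3, j < 3) f i j) =
  f 0%N 0%N * (f 1%N 1%N * f 2%N 2%N - f 1%N 2%N * f 2%N 1%N) - f 0%N 1%N * (f 1%N 0%N * f 2%N 2%N - f 1%N 2%N * f 2%N 0%N)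
  + f 0%N 2%N * (f 1%N 0%N * f 2%N 1%N - f 1%N 1%N * f 2%N 0%N).
Proof.
rewrite (expand_det_row _ 0) !big_ord_recl big_ord0 /cofactor.
rewrite !(expand_det_row _ 0) !big_ord_recl !big_ord0 /cofactor !det_mx11 !mxE /=.
rewrite /bump /=. ring. Qed.

Lemma det3E (R : realFieldType) (a b c : 'rV[R]_3) : det3 a b c =
  let e x k := x 0 (inord k : 'I_3) in
  e a 0 * (e b 1 * e c 2 - e b 2 * e c 1) - e a 1 * (e b 0 * e c 2 - e b 2 * e c 0)
  + e a 2 * (e b 0 * e c 1 - e b 1 * e c 0).
Proof.
rewrite /det3 (_ : col_mx a (col_mx b c) = \matrix_(i < 3, j < 3)
   (if (i : nat) == 0%N then a else if (i : nat) == 1%N then b else c) 0 (inord j)); last first.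
  apply/matrixP => i j; rewrite !mxE inord_val.
  case: splitP => k Hk; first by rewrite Hk (ord1 k).
  rewrite Hk mxE; case: (splitP k) => l Hl; rewrite Hl (ord1 l) //.
rewrite (@det33 _ (fun i j : nat => (if i == 0%N then a else if i == 1%N then b else c) 0 (inord j))) /=.
by [].
Qed.
Section K.
Variable R : realFieldType.
Lemma tors_exp (x0 x1 x2 x3 : 'rV[R]_3) (b0 b1 b2 b3 : R) :
  det3 (b1 *: x1 - b0 *: x0) (b2 *: x2 - b1 *: x1) (b3 *: x3 - b2 *: x2) =
  b1*b2*b3 * det3 x1 x2 x3 - b0*b2*b3 * det3 x0 x2 x3 + b0*b1*b3 * det3 x0 x1 x3
  - b0*b1*b2 * det3 x0 x1 x2.
Proof. rewrite !det3E /= !mxE; ring. Qed.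
Lemma tors1_exp (x0 x1 x2 x3 : 'rV[R]_3) :
  det3 (x1 - x0) (x2 - x1) (x3 - x2) =
  det3 x1 x2 x3 - det3 x0 x2 x3 + det3 x0 x1 x3 - det3 x0 x1 x2.
Proof. rewrite !det3E /= !mxE; ring. Qed.
Lemma det3Z (x0 x1 x2 : 'rV[R]_3) (b0 b1 b2 : R) :
  det3 (b0 *: x0) (b1 *: x1) (b2 *: x2) = b0 * b1 * b2 * det3 x0 x1 x2.
Proof. rewrite !det3E /= !mxE; ring. Qed.
Lemma kb_exp (x0 x1 x2 x3 : 'rV[R]_3) :
  det3 x2 (x1 - x0) (x3 - x2) = det3 x0 x2 x3 - det3 x1 x2 x3.
Proof. rewrite !det3E /= !mxE; ring. Qed.
Lemma alg (m0 m1 m2 m3 b0 b1 b2 b3 : R) : m3 != 0 -> b0 != 0 -> b1 != 0 -> b2 != 0 -> b3 != 0 ->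
  m0 - m1 + m2 - m3 = 0 ->
  b1*b2*b3 * m0 - b0*b2*b3 * m1 + b0*b1*b3 * m2 - b0*b1*b2 * m3 = 0 ->
  b3^-1 = (m0 / m3) * b0^-1 - (m0/m3 + (m1 - m0)/m3) * b1^-1 + (1 + (m1 - m0)/m3) * b2^-1.
Proof.
move=> h3 h0 h1 h2 h3' hT hT'.
have key : b3^-1 - ((m0 / m3) * b0^-1 - (m0/m3 + (m1 - m0)/m3) * b1^-1 + (1 + (m1 - m0)/m3) * b2^-1)
  = (b0*b1*b3 * (m0 - m1 + m2 - m3)
     - (b1*b2*b3 * m0 - b0*b2*b3 * m1 + b0*b1*b3 * m2 - b0*b1*b2 * m3)) / (b0*b1*b2*b3 * m3).
  by field; rewrite h3 h3' h2 h1 h0.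
by apply/eqP; rewrite -subr_eq0 key hT hT' mulr0 subrr mul0r.
Qed.
End K.

Theorem proposition6p3 (R : realFieldType) (r : int -> 'rV[R]_3) (beta : int -> R)
  (hr : centroaffine_curve r)
  (hbeta : forall n : int, beta n != 0)
  (htau : forall n : int, torsion r n = 0)
  (htau' : forall n : int, torsion (fun k => beta k *: r k) n = 0) :
  forall n : int,
    (beta (n + 2))^-1 =
      kappa r n * (beta (n - 1))^-1 - (kappa r n + kappabar r n) * (beta n)^-1
      + (1 + kappabar r n) * (beta (n + 1))^-1
    /\
    (beta (n + 2))^-1 - (beta (n + 1))^-1 =
      kappabar r n * ((beta (n + 1))^-1 - (beta n)^-1)
      - kappa r n * ((beta n)^-1 - (beta (n - 1))^-1).

Proof.
move=> n.
have e1 : n - 1 + 1 = n by rewrite subrK.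
have e2 : n + 1 + 1 = n + 2 by rewrite -addrA.
have hD : Dk r n != 0 by exact: hr.
have hT := htau n; have hT' := htau' n.
move: hT hT'; rewrite /torsion /tangent /Dk e1 e2.
set x0 := r (n - 1); set x1 := r n; set x2 := r (n + 1); set x3 := r (n + 2).
rewrite tors1_exp tors_exp => hT hT'.
have hD' : Dk r n = det3 x0 x1 x2 by [].
rewrite hD' in hD.
have {}hT : det3 x1 x2 x3 - det3 x0 x2 x3 + det3 x0 x1 x3 - det3 x0 x1 x2 = 0.
  by move/eqP: hT; rewrite mulf_eq0 invr_eq0 (negPf hD) orbF => /eqP.
have {}hT' : beta n * beta (n + 1) * beta (n + 2) * det3 x1 x2 x3 -
   beta (n - 1) * beta (n + 1) * beta (n + 2) * det3 x0 x2 x3 +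
   beta (n - 1) * beta n * beta (n + 2) * det3 x0 x1 x3 -
   beta (n - 1) * beta n * beta (n + 1) * det3 x0 x1 x2 = 0.
  move/eqP: hT'; rewrite det3Z mulf_eq0 invr_eq0 !mulf_eq0 (negPf hD) !(negPf (hbeta _)) /= orbF => /eqP.
  by [].
have H1 := @alg R _ _ _ _ _ _ _ _ hD (hbeta _) (hbeta _) (hbeta _) (hbeta _) hT hT'.
have Hk : kappa r n = det3 x1 x2 x3 / det3 x0 x1 x2 by [].
have Hkb : kappabar r n = (det3 x0 x2 x3 - det3 x1 x2 x3) / det3 x0 x1 x2.
  by rewrite /kappabar /tangent e1 e2 -kb_exp.
rewrite Hk Hkb; split; first by rewrite H1.
rewrite H1.
move: (det3 x0 x1 x2) (det3 x1 x2 x3) (det3 x0 x2 x3) => a b c.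
move: (beta (n - 1))^-1 (beta n)^-1 (beta (n + 1))^-1 => u v w.
by rewrite -!mulrA; ring.
Qed.
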